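(* Assume (P.1) and (P.2) hold. Let $N\in\mathbb N$ and let $\Omega\in\mathscr A$ be $N$-admissible with $\mathfrak m(\Omega)\in(0,+\infty)$. Then $\Lambda_N(\Omega)\le h_N(\Omega)$. If moreover (P.4) and (P.7) hold, then $N\,h_1(\Omega)\le\Lambda_N(\Omega)$; in particular $h_1(\Omega)=\lambda_{1,1}(\Omega)$.
   Context: $(X,\mathscr A,\mathfrak m)$ is a non-negative $\sigma$-finite measure space; for $A,B\in\mathscr A$, ''$A\subset B$'' means $\mathfrak m(A\setminus B)=0$. $P\colon\mathscr A\to[0,+\infty]$ is a proper functional. (P.1): $P(\emptyset)=0$. (P.2): $P(X)=0$. (P.4): if $\chi_{E_k}\to\chi_E$ in $L^1(X,\mathfrak m)$ then $P(E)\le\liminf_k P(E_k)$. (P.7): $P(E)=P(X\setminus E)$ for all $E\in\mathscr A$. An $N$-cluster is a family $\{\mathcal E(i)\}_{i=1}^N\subset\mathscr A$ with $0<\mathfrak m(\mathcal E(i))<+\infty$, $P(\mathcal E(i))<+\infty$, $\mathfrak m(\mathcal E(i)\cap\mathcal E(j))=0$ for $i\ne j$; $\Omega$ is $N$-admissible if it contains an $N$-cluster; $h_N(\Omega)=\inf\{\sum_{i=1}^N P(\mathcal E(i))/\mathfrak m(\mathcal E(i))\}$ over $N$-clusters in $\Omega$. For $\mathfrak m$-measurable $u$, $\mathrm{Var}(u):=\int_{\mathbb R}P(\{u>t\})\,dt$ if $t\mapsto P(\{u>t\})$ is $\mathscr L^1$-measurable, $+\infty$ otherwise; $BV(X,\mathfrak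 m)=\{u\in L^1(X,\mathfrak m):\mathrm{Var}(u)<+\infty\}$; $BV_0(\Omega,\mathfrak m)=\{u\in BV(X,\mathfrak m):\int_{X\setminus\Omega}|u|\,d\mathfrak m=0\}$. Define $\Lambda_N(\Omega)=\inf\sum_{i=1}^N \mathrm{Var}(u_i)/\|u_i\|_1$, the infimum over $N$-tuples $(u_1,\dots,u_N)$ with $u_i\in BV_0(\Omega,\mathfrak m)$, $\|u_i\|_1>0$, and pairwise disjoint supports ($\mathfrak m(\{u_i\neq0\}\cap\{u_j\ne0\})=0$ for $i\ne j$). $\lambda_{1,1}(\Omega):=\Lambda_1(\Omega)=\inf\{\mathrm{Var}(u)/\|u\|_1: u\in BV_0(\Omega,\mathfrak m),\ \|u\|_1>0\}$. *)

(* Defs.v *)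
From HB Require Import structures.
From mathcomp Require Import all_boot all_order all_algebra.
From mathcomp Require Import all_classical all_reals all_analysis.
From mathcomp Require Import measurable_realfun lebesgue_integral.

Unset Strict Implicit.
Unset Printing Implicit Defensive.
Import Order.TTheory GRing.Theory Num.Theory.
Local Open Scope classical_set_scope.
Local Open Scope ring_scope.
Local Open Scope ereal_scope.

(* (X, A, m) is [T : measurableType d] with [mu : {measure set T -> \bar R}];
   P : set T -> \bar R is the perimeter-like functional (only its values on
   measurable sets matter). *)

(* The real line endowed with the completed (Lebesgue) sigma-algebra, i.e.
   the sigma-algebra of L^1-measurable sets. *)
Definition RLeb (R : realType) :=
  caratheodory_type (R:=R) (@wlength R idfun)^*%mu.

Section defs.
Context {d : measure_display} {T : measurableType d} {R : realType}.
Variables (mu : {measure set T -> \bar R}) (P : set T -> \bar R).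

Definition msub (A B : set T) := mu (A `\` B) = 0.

Definition P_nonneg := forall E, measurable E -> 0 <= P E.
Definition P_proper := exists E, measurable E /\ P E < +oo.
(* P is a functional on A, whose elements are identified up to null sets *)
Definition P_null_invariant :=
  forall E F, measurable E -> measurable F -> msub E F -> msub F E -> P E = P F.
Definition P1 := P set0 = 0.
Definition P2 := P setT = 0.
Definition P4 := forall (E_ : nat -> set T) (E : set T),
  (forall k, measurable (E_ k)) -> measurable E ->
  (fun k => \int[mu]_x `|(\1_(E_ k) x)%:E - (\1_E x)%:E|) @ \oo --> 0 ->
  P E <= limn_einf (fun k => P (E_ k)).
Definition P7 := forall E, measurable E -> P E = P (~` E).

Definition cluster_in (N : nat) (Om : set T) (E : 'I_N -> set T) :=
  [/\ forall i, measurable (E i),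
      forall i, msub (E i) Om,
      forall i, 0 < mu (E i) < +oo,
      forall i, P (E i) < +oo &
      forall i j, i != j -> mu (E i `&` E j) = 0].

Definition admissible (N : nat) (Om : set T) := exists E, cluster_in N Om E.

Definition h_ (N : nat) (Om : set T) : \bar R :=
  ereal_inf [set x | exists E, cluster_in N Om E /\
     x = (\sum_(i < N) (fine (P (E i)) / fine (mu (E i)))%R)%:E ].

(* total variation via the coarea-type formula *)
Definition Var (u : T -> R) : \bar R :=
  if `[< measurable_fun (setT : set (RLeb R))
          (fun t : RLeb R => P [set x | (t < u x)%R]) >]
  then \int[@completed_lebesgue_measure R]_(t in (setT : set (RLeb R)))
          P [set x | (t < u x)%R]
  else +oo.

Definition norm1 (u : T -> R) : \bar R := \int[mu]_x `|(u x)%:E|.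

Definition BV (u : T -> R) :=
  measurable_fun setT u /\ mu.-integrable setT (EFin \o u) /\ Var u < +oo.

Definition BV0 (Om : set T) (u : T -> R) :=
  BV u /\ \int[mu]_(x in ~` Om) `|(u x)%:E| = 0.

Definition admissible_tuple (N : nat) (Om : set T) (u : 'I_N -> T -> R) :=
  [/\ forall i, BV0 Om (u i),
      forall i, 0 < norm1 (u i) &
      forall i j, i != j ->
        mu ([set x | u i x != 0%R] `&` [set x | u j x != 0%R]) = 0].

Definition Lambda_ (N : nat) (Om : set T) : \bar R :=
  ereal_inf [set x | exists u, admissible_tuple N Om u /\
     x = (\sum_(i < N) (fine (Var (u i)) / fine (norm1 (u i)))%R)%:E ].

Definition lambda11 (Om : set T) : \bar R := Lambda_ 1 Om.

End defs.

(* Main.v *)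
Require Import Defs.
From HB Require Import structures.
From mathcomp Require Import all_boot all_order all_algebra.
From mathcomp Require Import all_classical all_reals all_analysis.
From mathcomp Require Import measurable_realfun lebesgue_integral.
Import Order.TTheory GRing.Theory Num.Theory.
Local Open Scope classical_set_scope.
Local Open Scope ring_scope.
Local Open Scope ereal_scope.
Lemma cleb_itv (R : realType) (i : interval R) :
  @completed_lebesgue_measure R [set` i] =
  (if i.1 < i.2 then (i.2 : \bar R) - i.1 else 0)%E.
Proof. exact: (lebesgue_measure_itv i). Qed.

Lemma id_RLeb_mfun (R : realType) : measurable_fun setT (fun t : RLeb R => (t : R)).
Proof. move=> _ B mB. rewrite setTI. exact: sub_caratheodory. Qed.

Lemma mset_lt {d'} (T' : measurableType d') (R : realType) (f g : T' -> R) :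
  measurable_fun setT f -> measurable_fun setT g -> measurable [set z | (f z < g z)%R].
Proof.
move=> mf mg; have := measurable_fun_ltr mf mg measurableT (Y := [set true]) I.
rewrite setTI; congr measurable; apply/seteqP; split => z /=.
Qed.

Lemma mset_le {d'} (T' : measurableType d') (R : realType) (f g : T' -> R) :
  measurable_fun setT f -> measurable_fun setT g -> measurable [set z | (f z <= g z)%R].
Proof.
move=> mf mg; have := measurable_fun_ler mf mg measurableT (Y := [set true]) I.
rewrite setTI; congr measurable; apply/seteqP; split => z /=.
Qed.

Section sf.
Context {d : measure_display} {T : measurableType d} {R : realType}.
Variable (mu : {measure set T -> \bar R}).
Hypothesis musf : sigma_finite setT mu.
Definition mus := (mu : set T -> \bar R).
HB.instance Definition _ := Measure.on mus.
HB.instance Definition _ := @Measure_isSigmaFinite.Build _ _ _ mus musf.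


Definition Aset (u : T -> R) (t : R) : set T :=
  if (0 <= t)%R then [set x | (t < u x)%R] else ~` [set x | (t < u x)%R].

Definition lcS (u : T -> R) : set (T * RLeb R) :=
  ([set z | (0 <= (z.2 : R))%R] `&` [set z | ((z.2 : R) < u z.1)%R]) `|`
  ([set z | (u z.1 <= (z.2 : R))%R] `&` [set z | ((z.2 : R) < 0)%R]).

Lemma lcS_meas u : measurable_fun setT u -> measurable (lcS u).
Proof.
move=> mu_.
have m1 : measurable_fun setT (fun z : T * RLeb R => u z.1).
  exact: measurableT_comp.
have m2 : measurable_fun setT (fun z : T * RLeb R => (z.2 : R)).
  exact: (measurableT_comp (id_RLeb_mfun R)).
apply: measurableU; apply: measurableI.
- exact: (@mset_le _ _ _ (fun=> 0%R) (fun z : T * RLeb R => (z.2 : R)) (measurable_cst _) m2).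
- exact: (@mset_lt _ _ _ (fun z : T * RLeb R => (z.2 : R)) (fun z => u z.1) m2 m1).
- exact: (@mset_le _ _ _ (fun z : T * RLeb R => u z.1) (fun z => (z.2 : R)) m1 m2).
- exact: (@mset_lt _ _ _ (fun z : T * RLeb R => (z.2 : R)) (fun=> 0%R) m2 (measurable_cst _)).
Qed.

Lemma lcS_ysec u (t : RLeb R) : ysection (lcS u) t = Aset u t.
Proof.
rewrite /Aset; apply/seteqP; split => x; rewrite /ysection /= inE /lcS /=; case: ifPn => t0 /=.
- by move=> [[_ tu]|[ut t0']] //; have := lt_le_trans t0' t0; rewrite ltxx.
- by move=> [[]|[ut _]] //; apply/negP; rewrite -leNgt.
- by move=> tu; left.
- by move=> /negP; rewrite -leNgt => ut; right; split => //; rewrite ltNge.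
Qed.

Lemma Aset_meas u : measurable_fun setT u ->
  measurable_fun setT (fun t : RLeb R => mu (Aset u t)).
Proof.
move=> mu_.
have := indic_measurable_fun_fubini_tonelli_G mus (lcS_meas _ mu_).
rewrite (indic_fubini_tonelli_GE _ (lcS_meas _ mu_)).
rewrite (_ : (fun t : RLeb R => mu (Aset u t)) = mus \o ysection (lcS u)) //.
by apply/funext => t /=; rewrite lcS_ysec.
Qed.

Lemma layer_cake (u : T -> R) : measurable_fun setT u ->
  \int[mu]_x `|(u x)%:E| =
  \int[@completed_lebesgue_measure R]_(t in (setT : set (RLeb R))) mu (Aset u t).
Proof.
move=> mu_.
have mS := lcS_meas _ mu_.
have := indic_fubini_tonelli mus (@completed_lebesgue_measure R) mS.
rewrite (indic_fubini_tonelli_FE _ mS) (indic_fubini_tonelli_GE _ mS).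
move=> H.
transitivity (\int[mus]_x ((@completed_lebesgue_measure R) \o xsection (lcS u)) x).
  apply: eq_integral => x _ /=.
  have -> : xsection (lcS u) x = if (0 <= u x)%R then `[0%R, u x[%classic else `[u x, 0%R[%classic.
    apply/seteqP; split => t; rewrite /xsection /= inE /lcS /=; case: ifPn => ux;
      rewrite /= in_itv /=.
    - move=> [[t0 tu]|[ut t0]]; first by rewrite t0 tu.
      by have := le_lt_trans ux (le_lt_trans ut t0); rewrite ltxx.
    - move=> [[t0 tu]|[ut t0]]; last by rewrite ut t0.
      by move: ux; rewrite (le_trans t0 (ltW tu)).
    - by move=> /andP[t0 tu]; left.
    - by move=> /andP[t0 tu]; right.
  case: ifPn => ux; rewrite cleb_itv /=.
    rewrite lte_fin; case: ltgtP ux => //.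
      by move=> ux _; rewrite sube0 ger0_norm // ltW.
    by move=> <- _; rewrite normr0.
  rewrite lte_fin; move: ux; rewrite -ltNge => ux; rewrite ux.
  by rewrite add0e ltr0_norm.
rewrite H; apply: eq_integral => t _ /=.
by rewrite lcS_ysec.
Qed.

Section part2.
Variables (P : set T -> \bar R) (Om : set T).
Hypotheses (P0 : P_nonneg P) (P7h : P7 P) (mOm : measurable Om) (Omfin : mu Om < +oo).

Local Notation h1 := (h_ mu P 1 Om).

Lemma h1_ge0 : 0 <= h1.
Proof.
apply: le_ereal_inf_tmp => _ [E [[mE _ _ _ _] ->]].
rewrite lee_fin; apply: sumr_ge0 => i _; apply: divr_ge0; apply: fine_ge0;
  [exact: P0|exact: measure_ge0].
Qed.

Lemma h1_mul A : measurable A -> msub mu A Om -> mu A < +oo -> h1 * mu A <= P A.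
Proof.
move=> mA sA Afin.
have PA0 := P0 _ mA.
have [->|muA0] := eqVneq (mu A) 0; first by rewrite mule0.
have [PAoo|PAfin] := eqVneq (P A) +oo; first by rewrite PAoo leey.
have PAf : P A \is a fin_num by rewrite ge0_fin_numE // ltey.
have muAf : mu A \is a fin_num by rewrite ge0_fin_numE.
have muApos : (0 < fine (mu A))%R by apply: fine_gt0; rewrite lt0e muA0 measure_ge0 Afin.
have : h1 <= (fine (P A) / fine (mu A))%:E.
  apply: ereal_inf_lbound; exists (fun _ : 'I_1 => A); split; last by rewrite big_ord1.
  split => //.
  - by move=> i; rewrite lt0e muA0 measure_ge0 /= Afin.
  - by move=> i; rewrite ltey.
  - by move=> i j; rewrite !ord1.
move/(lee_wpmul2r (measure_ge0 mu A)) => /le_trans; apply.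
by rewrite -[X in _ * X](fineK muAf) -EFinM divfK ?gt_eqF // fineK.
Qed.

Lemma BV0_msub u A : BV0 mu P Om u -> measurable A ->
  A `<=` [set x | u x != 0%R] -> msub mu A Om /\ mu A < +oo.
Proof.
move=> [[mu_ _] zero] mA Au.
have mC : measurable (~` Om) by exact: measurableC.
have mf : measurable_fun (~` Om) (EFin \o u).
  by apply/measurable_EFinP; exact: measurable_funS mu_.
have := (ae_eq_integral_abs mu mC mf).1 zero.
case=> N [mN N0 sub].
have A0 : mu (A `\` Om) = 0.
  apply: (subset_measure0 (measurableD mA mOm) mN) => // x [Ax nOx].
  apply: sub => /= H; have := H nOx; move=> [] /eqP; rewrite (negbTE (Au x Ax)).
  done.
split => //.
have mU : measurable (Om `|` (A `\` Om)) by apply: measurableU => //; exact: measurableD.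
have le1 : mu A <= mu (Om `|` (A `\` Om)).
  apply: le_measure; rewrite ?inE //.
  by move=> x Ax; have [Ox|nOx] := pselect (Om x); [left|right].
apply: (le_lt_trans le1); apply: (le_lt_trans (measureU2 _ mOm (measurableD mA mOm))).
by rewrite -[X in _ + X]/(mu (A `\` Om)) A0 adde0.
Qed.

Lemma key u : BV0 mu P Om u -> h1 * norm1 mu u <= Var P u.
Proof.
move=> BVu; have [[mu_ [iu Vfin]] zero] := BVu.
move: Vfin; rewrite /Var; case: asboolP => mP; last by rewrite ltxx.
move=> _.
rewrite /norm1 (layer_cake _ mu_) -ge0_integralZl //.
2:{ have := Aset_meas _ mu_. intro HH. exact HH. }
2:{ exact: h1_ge0. }
have mA := Aset_meas _ mu_.
have mhA : measurable_fun setT (fun t : RLeb R => h1 * mu (Aset u t)).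
  exact: (measurable_funeM _ mA).
have f10 : forall t : RLeb R, setT t -> 0 <= h1 * mu (Aset u t).
  by move=> t _; apply: mule_ge0; [exact: h1_ge0|exact: measure_ge0].
apply: (ge0_le_integral _ measurableT f10 mhA mP).
move=> t _.
have mlt : measurable [set x | (t < u x)%R].
  exact: (@mset_lt _ _ _ (fun=> (t : R)) u (measurable_cst _) mu_).
rewrite /Aset; case: ifPn => t0.
- have sub : [set x | (t < u x)%R] `<=` [set x | u x != 0%R].
    by move=> x /= tx; rewrite gt_eqF // (le_lt_trans t0 tx).
  have [s f] := BV0_msub _ _ BVu mlt sub.
  exact: h1_mul.
- rewrite (P7h _ mlt).
  have sub : ~` [set x | (t < u x)%R] `<=` [set x | u x != 0%R].
    move=> x /= /negP; rewrite -leNgt => ux.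
    by rewrite lt_eqF // (le_lt_trans ux) // ltNge.
  have [s f] := BV0_msub _ _ BVu (measurableC mlt) sub.
  exact: (h1_mul _ (measurableC mlt) s f).
Qed.

End part2.
End sf.

Lemma mem_co01 (R : realType) (t : RLeb R) :
  (t \in (`[0%R, 1%R[%classic : set (RLeb R))) = (0 <= (t : R) < 1)%R.
Proof. by apply/idP/idP; [move/set_mem | move=> h; apply/mem_set]; rewrite /= in_itv. Qed.

Section part1.
Context {d : measure_display} {T : measurableType d} {R : realType}.
Variables (mu : {measure set T -> \bar R}) (P : set T -> \bar R).
Hypotheses (P0 : P_nonneg P) (P1h : P1 P) (P2h : P2 P).

Lemma Var_indic E : measurable E -> Var P (\1_E : T -> R) = P E.
Proof.
move=> mE.
have mI : measurable (`[0%R, 1%R[%classic : set (RLeb R)).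
  exact: sub_caratheodory (measurable_itv _).
have E1 : (fun t : RLeb R => P [set x | (t < (\1_E : T -> R) x)%R]) =
    (fun t => P E * ((\1_(`[0%R, 1%R[%classic : set (RLeb R)) : RLeb R -> R) t)%:E).
  apply/funext => t /=; rewrite indicE mem_co01.
  have [t0|t0] := ltP t 0%R.
  - have -> : [set x | (t < (\1_E : T -> R) x)%R] = setT.
      apply/seteqP; split => x //= _; rewrite indicE; apply: (lt_le_trans t0).
      by case: (_ \in _).
    by rewrite P2h mule0.
  - have [t1|t1] := ltP t 1%R.
    + have -> : [set x | (t < (\1_E : T -> R) x)%R] = E.
        apply/seteqP; split => x /=; rewrite indicE.
          case: (boolP (x \in E)) => [/set_mem //|_]; by rewrite ltNge t0.
        by move=> /mem_set ->.
      by rewrite mule1.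
    + have -> : [set x | (t < (\1_E : T -> R) x)%R] = set0.
        apply/seteqP; split => x //=; rewrite indicE.
        by case: (_ \in _); rewrite ltNge ?t1 // (le_trans _ t1).
      by rewrite P1h /= mule0.
have mf : measurable_fun setT
    (fun t : RLeb R => ((\1_(`[0%R, 1%R[%classic : set (RLeb R)) : RLeb R -> R) t)%:E).
  by apply/measurable_EFinP; exact: measurable_indic.
rewrite /Var E1 asboolT; last exact: measurable_funeM.
rewrite ge0_integralZl //; last exact: P0.
rewrite integral_indic // setIT.
have H1 : @completed_lebesgue_measure R `[0%R, 1%R[%classic = 1 by rewrite cleb_itv /= lte_fin ltr01 sube0.
change (P E * @completed_lebesgue_measure R `[0%R, 1%R[%classic = P E).
by rewrite H1 mule1.
Qed.

Lemma norm1_indic E : measurable E -> norm1 mu (\1_E : T -> R) = mu E.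
Proof.
move=> mE; rewrite /norm1.
rewrite (eq_integral (fun x => ((\1_E : T -> R) x)%:E)); last first.
  by move=> x _; rewrite gee0_abs // lee_fin indicE; case: (_ \in _).
by rewrite integral_indic // setIT.
Qed.

Lemma indic_BV0 Om E : measurable Om -> measurable E -> msub mu E Om ->
  mu E < +oo -> P E < +oo -> BV0 mu P Om (\1_E : T -> R).
Proof.
move=> mOm mE sE Efin PEfin; split; first split.
- exact: measurable_indic.
- split; last by rewrite Var_indic.
  apply/integrableP; split; first by apply/measurable_EFinP; exact: measurable_indic.
  by have := norm1_indic _ mE; rewrite /norm1 => ->.
rewrite (eq_integral (fun x => ((\1_E : T -> R) x)%:E)); last first.
  by move=> x _; rewrite gee0_abs // lee_fin indicE; case: (_ \in _).
by rewrite integral_indic //; exact: measurableC.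
Qed.

Lemma Lambda_le_h N Om : measurable Om -> Lambda_ mu P N Om <= h_ mu P N Om.
Proof.
move=> mOm; apply: le_ereal_inf_tmp => _ [E [[mE sE pE fE dE] ->]].
apply: ereal_inf_lbound.
exists (fun i => \1_(E i) : T -> R); split.
  split.
  - move=> i; apply: indic_BV0 => //; by have /andP[] := pE i.
  - by move=> i; rewrite norm1_indic //; have /andP[] := pE i.
  - move=> i j ij; rewrite -(dE i j ij); congr (mu _).
    have nz : forall A : set T, [set x | (\1_A : T -> R) x != 0%R] = A.
      move=> A; apply/seteqP; split => x /=; rewrite indicE.
        by case: (boolP (x \in A)) => [/set_mem //| _]; rewrite eqxx.
      by move=> /mem_set ->; rewrite oner_neq0.
    by rewrite !nz.
apply: congr1; apply: eq_bigr => i _.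
by rewrite Var_indic // norm1_indic.
Qed.

End part1.

Theorem theorem5p4 (d : measure_display) (T : measurableType d) (R : realType)
  (mu : {measure set T -> \bar R}) (P : set T -> \bar R) :
  sigma_finite setT mu ->
  P_nonneg P -> P_proper P -> P_null_invariant mu P ->
  P1 P -> P2 P ->
  forall (N : nat) (Om : set T),
  (0 < N)%N -> measurable Om -> admissible mu P N Om ->
  0 < mu Om < +oo ->
  Lambda_ mu P N Om <= h_ mu P N Om /\
  (P4 mu P -> P7 P ->
     (N%:R)%:E * h_ mu P 1 Om <= Lambda_ mu P N Om /\
     h_ mu P 1 Om = lambda11 mu P Om).
Proof.
move=> musf P0 _ _ P1h P2h N Om N0 mOm [E [mE sE pE fE dE]] /andP[_ Omfin].
split; first exact: Lambda_le_h.
move=> _ P7h.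
have h1fin : h_ mu P 1 Om \is a fin_num.
  have h10 := h1_ge0 mu P Om P0.
  rewrite ge0_fin_numE //.
  pose i0 : 'I_N := Ordinal N0.
  apply: (le_lt_trans (ereal_inf_lbound _)); last exact: (ltry (fine (P (E i0)) / fine (mu (E i0)))%R).
  exists (fun _ : 'I_1 => E i0); split; last by rewrite big_ord1.
  by split => // i j; rewrite !ord1.
have part2 : forall M, M%:R%:E * h_ mu P 1 Om <= Lambda_ mu P M Om.
  move=> M; apply: le_ereal_inf_tmp => _ [u [[BVu pos disj] ->]].
  rewrite -(fineK h1fin) -EFinM lee_fin.
  have -> : (M%:R * fine (h_ mu P 1 Om))%R = (\sum_(i < M) fine (h_ mu P 1 Om))%R.
    by rewrite sumr_const card_ord mulr_natl.
  apply: ler_sum => i _.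
  have K := key mu musf P Om P0 P7h mOm Omfin _ (BVu i).
  have [[_ [iu Vfin]] _] := BVu i.
  have nfin : norm1 mu (u i) \is a fin_num.
    rewrite ge0_fin_numE; last exact: integral_ge0.
    by move/integrableP : iu => [_]; rewrite /norm1.
  have Vf : Var P (u i) \is a fin_num.
    rewrite ge0_fin_numE //; rewrite (le_trans _ K) //.
    by apply: mule_ge0; [exact: h1_ge0|exact: integral_ge0].
  have npos : (0 < fine (norm1 mu (u i)))%R.
    apply: fine_gt0; apply/andP; split; first exact: pos.
    by rewrite -ge0_fin_numE //; exact: integral_ge0.
  rewrite ler_pdivlMr // -lee_fin EFinM !fineK //.
split; first exact: part2.
apply: le_anti; rewrite Lambda_le_h //.
by rewrite andbT; have := part2 1%N; rewrite mul1e.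
Qed.
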